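(* Let $d\ge3$ and $\varepsilon\in(0,1]$. Then $$P(\varepsilon,\mathcal C_d,\|\cdot\|_{L^1})\le N_{[\,]}(\varepsilon,\mathcal C_d,\|\cdot\|_{L^1})\le\frac{d^d}{d!}\Big(\frac1\varepsilon-\frac12\Big(1-\frac3d\Big)\Big)^d\le\frac{d^d}{d!}\,\varepsilon^{-d}.$$
   Context: Let $I^d=[0,1)^d$ and $\lambda^d$ be Lebesgue measure; all norms are in $L^1(I^d,\lambda^d)$. For $x\in I^d$ let $[0,x)=\prod_{i=1}^d[0,x_i)$, and let $\mathcal C_d=\{1_{[0,x)}: x\in I^d\}$ be the set of indicator functions of anchored boxes. For functions $\ell,u\in L^1$, the bracket $[\ell,u]$ is $\{f\in L^1:\ell\le f\le u\text{ pointwise}\}$; it is an $\varepsilon$-bracket if $\|u-\ell\|_{L^1}\le\varepsilon$. The bracketing number $N_{[\,]}(\varepsilon,\mathcal F,\|\cdot\|_{L^1})$ is the minimal number of $\varepsilon$-brackets whose union contains $\mathcal F$. A set $\mathcal S$ is $\varepsilon$-separated if $\|f-g\|_{L^1}>\varepsilon$ for all distinct $f,g\in\mathcal S$, and the packing number $P(\varepsilon,\mathcal F,\|\cdot\|_{L^1})$ is the maximal cardinality of an $\varepsilon$-separated subset of $\mathcal F$. *)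

(* Defs.v *)
From HB Require Import structures.
From mathcomp Require Import all_boot all_order all_algebra.
From mathcomp Require Import all_classical all_reals all_analysis.

Import Order.TTheory GRing.Theory Num.Theory.
Import numFieldNormedType.Exports.
Local Open Scope classical_set_scope.
Local Open Scope ring_scope.

Section Defs.
Variable R : realType.

(* points of R^d are d-tuples; R^d carries the product (Borel) sigma-algebra
   provided by MathComp-Analysis (measurable_structure.v, measure_tuple_display) *)

Definition cube (d : nat) : set (d.-tuple R) :=
  [set t | forall i : 'I_d, 0 <= tnth t i < 1].

(* the integral over I^d w.r.t. lambda^d of a nonnegative function, written as
   the iterated Lebesgue integral over [0,1) in each coordinate
   (first coordinate outermost); by Tonelli this is the integral against
   the d-dimensional Lebesgue measure for measurable nonnegative functions *)
Fixpoint cube_integral (d : nat) : (d.-tuple R -> \bar R) -> \bar R :=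
  match d with
  | 0 => fun f => f [tuple]
  | n.+1 => fun f =>
      (\int[@lebesgue_measure R]_(x in `[0%R, 1%R[) cube_integral n (fun t => f (cons_tuple x t)))%E
  end.

Definition L1norm (d : nat) (g : d.-tuple R -> R) : \bar R :=
  cube_integral d (fun t => (`|g t|)%:E).

Definition inL1 (d : nat) (g : d.-tuple R -> R) : Prop :=
  measurable_fun (cube d) g /\ (L1norm d g < +oo)%E.

Definition anchored_box (d : nat) (x : d.-tuple R) : set (d.-tuple R) :=
  [set t | forall i : 'I_d, 0 <= tnth t i < tnth x i].

Definition Cd (d : nat) : set (d.-tuple R -> R) :=
  [set f | exists2 x, cube d x & f = \1_(anchored_box d x)].

Definition in_bracket (d : nat) (l u f : d.-tuple R -> R) : Prop :=
  inL1 d f /\ forall t, cube d t -> l t <= f t <= u t.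

Definition eps_bracket (d : nat) (eps : R) (l u : d.-tuple R -> R) : Prop :=
  inL1 d l /\ inL1 d u /\ (L1norm d (fun t => (u t - l t)%R) <= eps%:E)%E.

Definition bracketing_number (d : nat) (eps : R)
    (F : set (d.-tuple R -> R)) : \bar R :=
  ereal_inf [set (k%:R)%:E | k in [set k : nat |
    exists l u : 'I_k -> d.-tuple R -> R,
      (forall i, eps_bracket d eps (l i) (u i)) /\
      (forall f, F f -> exists i, in_bracket d (l i) (u i) f)]].

Definition separated_family (d : nat) (eps : R) (F : set (d.-tuple R -> R))
    (k : nat) (S : 'I_k -> d.-tuple R -> R) : Prop :=
  injective S /\ (forall i, F (S i)) /\
  (forall i j, S i <> S j -> (eps%:E < L1norm d (fun t => (S i t - S j t)%R))%E).

Definition packing_number (d : nat) (eps : R)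
    (F : set (d.-tuple R -> R)) : \bar R :=
  ereal_sup [set (k%:R)%:E | k in [set k : nat |
    exists S : 'I_k -> d.-tuple R -> R, separated_family d eps F k S]].

End Defs.

(* Main.v *)
Require Import Defs.
From HB Require Import structures.
From mathcomp Require Import all_boot all_order all_algebra.
From mathcomp Require Import all_classical all_reals all_analysis.
From mathcomp Require Import ring lra.
Import Order.TTheory GRing.Theory Num.Theory.
Import numFieldNormedType.Exports.
Local Open Scope classical_set_scope.
Local Open Scope ring_scope.
Section S.
Variable R : realType.
Local Notation mu := (@lebesgue_measure R).

Lemma int_mono (D : set R) (f g : R -> \bar R) :
  (forall x, D x -> (0 <= f x)%E) -> (forall x, D x -> (f x <= g x)%E) ->
  (\int[mu]_(x in D) f x <= \int[mu]_(x in D) g x)%E.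
Proof.
move=> f0 fg.
have g0 : forall x, D x -> (0 <= g x)%E by move=> x Dx; exact: le_trans (f0 _ Dx) (fg _ Dx).
rewrite !ge0_integralE //; apply: ereal_sup_le => _ [h Hh <-]; exists h => //= x.
apply: le_trans (Hh x) _; rewrite /patch; case: ifP => // /set_mem Dx; exact: fg.
Qed.

Lemma tnth_cons0 n (x : R) (t : n.-tuple R) : tnth (cons_tuple x t) ord0 = x.
Proof. exact: tnth0. Qed.
Lemma tnth_consS n (x : R) (t : n.-tuple R) (i : 'I_n) :
  tnth (cons_tuple x t) (lift ord0 i) = tnth t i.
Proof. exact: tnthS. Qed.

Lemma cube_cons n (x : R) (t : n.-tuple R) :
  cube R n.+1 (cons_tuple x t) <-> (0 <= x < 1 /\ cube R n t).
Proof.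
split.
  move=> H; split; first by have := H ord0; rewrite tnth_cons0.
  by move=> i; have := H (lift ord0 i); rewrite tnth_consS.
move=> [Hx Ht] i; case: (unliftP ord0 i) => [j ->|->].
  by rewrite tnth_consS. by rewrite tnth_cons0.
Qed.

Lemma box_cons n (b0 x : R) (b t : n.-tuple R) :
  anchored_box R n.+1 (cons_tuple b0 b) (cons_tuple x t) <->
  (0 <= x < b0 /\ anchored_box R n b t).
Proof.
split.
  move=> H; split; first by have := H ord0; rewrite !tnth_cons0.
  by move=> i; have := H (lift ord0 i); rewrite !tnth_consS.
move=> [Hx Ht] i; case: (unliftP ord0 i) => [j ->|->].
  by rewrite !tnth_consS. by rewrite !tnth_cons0.
Qed.

Lemma cint_ge0 n (f : n.-tuple R -> \bar R) :
  (forall t, cube R n t -> (0 <= f t)%E) -> (0 <= cube_integral R n f)%E.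
Proof.
elim: n f => [|n IH] f f0 /=.
  by apply: f0 => -[].
apply: integral_ge0 => x /= /andP[]; rewrite !bnd_simp => x0 x1.
apply: IH => t Ht; apply: f0; apply/cube_cons; split => //; exact/andP.
Qed.

Lemma cint_mono n (f g : n.-tuple R -> \bar R) :
  (forall t, cube R n t -> (0 <= f t)%E) ->
  (forall t, cube R n t -> (f t <= g t)%E) ->
  (cube_integral R n f <= cube_integral R n g)%E.
Proof.
elim: n f g => [|n IH] f g f0 fg /=.
  by apply: fg => -[].
apply: int_mono => x /= /andP[]; rewrite !bnd_simp => x0 x1.
  apply: cint_ge0 => t Ht; apply: f0; apply/cube_cons; split => //; exact/andP.
apply: IH => t Ht.
  by apply: f0; apply/cube_cons; split => //; exact/andP.
by apply: fg; apply/cube_cons; split => //; exact/andP.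
Qed.

Lemma mu_co (u v : R) : u <= v -> mu `[u, v[ = (v - u)%:E.
Proof.
move=> uv; rewrite lebesgue_measure_itv /= lte_fin.
case: ltP => // vu; have -> : v = u by apply: le_anti; rewrite vu uv.
by rewrite subrr.
Qed.

Lemma int_step (a0 b0 p q : R) : 0 <= a0 -> a0 <= b0 -> b0 <= 1 -> 0 <= p -> 0 <= q ->
 (\int[mu]_(x in `[0%R, 1%R[) (p * \1_`[0%R, a0[ x + q * \1_`[a0, b0[ x)%:E =
   (p * a0 + q * (b0 - a0))%:E)%E.
Proof.
move=> a00 ab b1 p0 q0.
under eq_integral => x _ do rewrite EFinD.
rewrite ge0_integralD //; last 4 first.
- by move=> x _; rewrite lee_fin mulr_ge0.
- apply/measurable_realfun.measurable_EFinP; apply: measurable_realfun.measurable_funM => //.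
- by move=> x _; rewrite lee_fin mulr_ge0.
- apply/measurable_realfun.measurable_EFinP; apply: measurable_realfun.measurable_funM => //.
have -> := (@integralZl_indic _ _ _ mu _ (measurable_itv `[0%R, 1%R[) (fun=> `[0%R, a0[%classic) p); last 2 first.
  by move=> /(lt_le_trans)/(_ p0); rewrite ltxx.
  exact: measurable_itv.
have -> := (@integralZl_indic _ _ _ mu _ (measurable_itv `[0%R, 1%R[) (fun=> `[a0, b0[%classic) q); last 2 first.
  by move=> /(lt_le_trans)/(_ q0); rewrite ltxx.
  exact: measurable_itv.
rewrite !integral_indic //= !setIidl; first last.
- by apply: subitvP; rewrite subitvE !bnd_simp (le_trans ab b1).
- by apply: subitvP; rewrite subitvE !bnd_simp a00 b1.
rewrite !mu_co //.
by rewrite subr0 -!EFinM -EFinD.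
Qed.

Lemma indic_co (u v x : R) : \1_(`[u, v[%classic) x = ((u <= x < v)%R)%:R :> R.
Proof. rewrite indicE. case: (boolP (u <= x < v)%R) => h.
 by rewrite mem_set //= in_itv.
by rewrite memNset //= in_itv /=; apply/negP. Qed.

Definition vol n (b : n.-tuple R) := \prod_(i < n) tnth b i.
Arguments vol {n}.

Lemma vol_cons n (b0 : R) (b : n.-tuple R) : vol (cons_tuple b0 b) = b0 * vol b.
Proof.
rewrite /vol big_ord_recl tnth_cons0; congr (_ * _).
by apply: eq_bigr => i _; rewrite tnth_consS.
Qed.

Lemma indic_box_cons n (b0 x : R) (b t : n.-tuple R) :
  \1_(anchored_box R n.+1 (cons_tuple b0 b)) (cons_tuple x t) =
  ((0 <= x < b0)%R)%:R * \1_(anchored_box R n b) t :> R.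
Proof.
rewrite !indicE; case: (boolP (0 <= x < b0)%R) => h.
  rewrite mul1r; case: (pselect (anchored_box R n b t)) => H.
    by rewrite !mem_set //; apply/box_cons; split.
  by rewrite !memNset // => /box_cons [].
by rewrite mul0r memNset // => /box_cons [] H1 _; rewrite H1 in h.
Qed.

Lemma vol_ge0 n (b : n.-tuple R) : (forall i, 0 <= tnth b i) -> 0 <= vol b.
Proof. by move=> H; apply: prodr_ge0 => i _. Qed.

Lemma vol_le n (a b : n.-tuple R) : (forall i, 0 <= tnth a i) ->
  (forall i, tnth a i <= tnth b i) -> vol a <= vol b.
Proof. by move=> H1 H2; apply: ler_prod => i _; rewrite H1 H2. Qed.

Lemma cint_box n (a b : n.-tuple R) (k : R) (c : bool) :
  0 <= k -> (forall i, 0 <= tnth a i) -> (forall i, tnth a i <= tnth b i) ->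
  (forall i, tnth b i <= 1) ->
  cube_integral R n (fun t => (k * `|\1_(anchored_box R n b) t -
     c%:R * \1_(anchored_box R n a) t|)%:E) = (k * (vol b - c%:R * vol a))%:E.
Proof.
elim: n a b k c => [|n IH] a b k c k0 a0 ab b1 /=.
  have H (u : 0.-tuple R) : \1_(anchored_box R 0 u) [tuple] = 1 :> R.
    by rewrite indicE mem_set // => -[].
  rewrite !H /vol !big_ord0; case: c => /=.
    by rewrite mul1r subrr normr0.
  by rewrite mul0r subr0 normr1.
case/tupleP: a a0 ab => a0 a ha0 hab.
case/tupleP: b hab b1 => b0 b hab hb1.
have ha00 : 0 <= a0 by have := ha0 ord0; rewrite tnth0.
have ha0' : forall i, 0 <= tnth a i by move=> i; have := ha0 (lift ord0 i); rewrite tnthS.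
have hab0 : a0 <= b0 by have := hab ord0; rewrite !tnth0.
have hab' : forall i, tnth a i <= tnth b i by move=> i; have := hab (lift ord0 i); rewrite !tnthS.
have hb10 : b0 <= 1 by have := hb1 ord0; rewrite tnth0.
have hb1' : forall i, tnth b i <= 1 by move=> i; have := hb1 (lift ord0 i); rewrite tnthS.
have vab := @vol_le _ _ _ ha0' hab'.
have va0 := @vol_ge0 _ _ ha0'.
have vb0 : 0 <= vol b by apply: le_trans vab.
transitivity (\int[mu]_(x in `[0%R, 1%R[)
   ((k * (vol b - c%:R * vol a)) * \1_`[0%R, a0[ x + (k * vol b) * \1_`[a0, b0[ x)%:E)%E.
  apply: eq_integral => x /[!inE] /andP[]; rewrite !bnd_simp => x0 x1.
  rewrite (_ : (fun t => _) = (fun t => ((k * ((x < b0)%R)%:R) * `|\1_(anchored_box R n b) t -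
      ((c && (x < a0)%R))%:R * \1_(anchored_box R n a) t|)%:E)); last first.
    apply/funext => t; rewrite !indic_box_cons x0 /=.
    have [xa|ax] := ltP x a0.
      rewrite (lt_le_trans xa hab0) andbT /=.
      by rewrite ?(mulr1n, mulr0n, mul1r, mul0r, mulr1, mulr0, subr0, sub0r, normr0).
    have [xb|bx] := ltP x b0.
      by rewrite andbF /= ?(mulr1n, mulr0n, mul1r, mul0r, mulr1, mulr0, subr0, sub0r, normr0).
    by rewrite andbF /= ?(mulr1n, mulr0n, mul1r, mul0r, mulr1, mulr0, subr0, sub0r, normr0, oppr0, normr0, mulr0).
  rewrite IH //; last by rewrite mulr_ge0.
  rewrite !indic_co x0 /=; congr (_%:E).
  have [xa|ax] := ltP x a0.
    rewrite (lt_le_trans xa hab0) andbT /= ?(mulr1n, mulr0n); ring.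
  have [xb|bx] := ltP x b0; first by rewrite andbF /= ?(mulr1n, mulr0n); ring.
  by rewrite andbF /= ?(mulr1n, mulr0n); ring.
rewrite int_step //; last 2 first.
  by rewrite mulr_ge0 // subr_ge0; case: c => /=; rewrite ?mul1r ?mul0r.
  by rewrite mulr_ge0.
congr (_%:E); rewrite !vol_cons; lra.
Qed.

Lemma box_meas n (b : n.-tuple R) : measurable (anchored_box R n b).
Proof.
have -> : anchored_box R n b = \bigcap_(i in [set: 'I_n]) ((@tnth n R ^~ i) @^-1` `[0%R, tnth b i[).
  apply/seteqP; split => t /=.
    by move=> H i _ /=; rewrite in_itv /= H.
  by move=> H i; have := H i I; rewrite /= in_itv.
apply: fin_bigcap_measurable; first exact: finite_finset.
move=> i _; rewrite -[X in measurable X]setTI.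
by apply: measurable_tnth => //; exact: measurable_itv.
Qed.
Lemma indic_meas n (b : n.-tuple R) D : measurable_fun D (\1_(anchored_box R n b) : _ -> R).
Proof. apply: measurable_realfun.measurable_indic; exact: box_meas. Qed.

End S.

Section C.
Variable R : realType.
Variable e : R.
Hypothesis e0 : 0 < e.

Fixpoint bU (w : R) (js : seq nat) : seq R :=
  if js is j :: js' then (w - j%:R * e) / w :: bU (w - j%:R * e) js' else [::].
Fixpoint bL (w : R) (js : seq nat) : seq R :=
  if js is j :: js' then (w - j.+1%:R * e) / w :: bL (w - j%:R * e) js' else [::].

Lemma size_bU w js : size (bU w js) = size js.
Proof. by elim: js w => //= j js IH w; rewrite IH. Qed.
Lemma size_bL w js : size (bL w js) = size js.
Proof. by elim: js w => //= j js IH w; rewrite IH. Qed.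

Lemma prod_bU w js : 0 < w - (sumn js)%:R * e ->
  \prod_(x <- bU w js) x = (w - (sumn js)%:R * e) / w.
Proof.
elim: js w => [|j js IH] w /=.
  by rewrite big_nil mul0r subr0 => w0; rewrite divff // gt_eqF.
rewrite natrD mulrDl opprD addrA => H.
have s0 : 0 <= (sumn js)%:R * e by rewrite mulr_ge0 // ltW.
have j0 : 0 <= j%:R * e by rewrite mulr_ge0 // ltW.
have w'0 : 0 < w - j%:R * e by (move: e0; lra).
have w0 : 0 < w by (move: e0; lra).
rewrite big_cons IH //; field; rewrite ?gt_eqF //.
Qed.

Lemma bnds w js : 0 <= w - (sumn js).+1%:R * e ->
  forall i, (i < size js)%N ->
  0 <= nth 0 (bL w js) i /\ nth 0 (bL w js) i <= nth 0 (bU w js) i /\ nth 0 (bU w js) i <= 1.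
Proof.
elim: js w => [|j js IH] w //= H [|i] /=.
  move=> _.
  have s0 : 0 <= (sumn js)%:R * e by rewrite mulr_ge0 // ltW.
  have key : (j + sumn js).+1%:R = j%:R + (sumn js)%:R + 1 :> R by rewrite -addn1 !natrD.
  rewrite key !mulrDl mul1r in H.
  have j0 : 0 <= j%:R * e by rewrite mulr_ge0 // ltW.
  have w0 : 0 < w by (move: e0; lra).
  have -> : j.+1%:R * e = j%:R * e + e by rewrite -addn1 natrD mulrDl mul1r.
  split; first by rewrite divr_ge0 //; (move: e0; lra).
  split; first by rewrite ler_pM2r ?invr_gt0 //; (move: e0; lra).
  by rewrite ler_pdivrMr // mul1r; (move: e0; lra).
rewrite ltnS => Hi; apply: IH => //.
by move: H; rewrite -addnS natrD mulrDl opprD addrA.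
Qed.

Lemma bndsU w js : 0 < w - (sumn js)%:R * e ->
  forall i, (i < size js)%N -> 0 <= nth 0 (bU w js) i <= 1.
Proof.
elim: js w => [|j js IH] w //= H [|i] /=.
  move=> _.
  have s0 : 0 <= (sumn js)%:R * e by rewrite mulr_ge0 // ltW.
  move: H; rewrite natrD mulrDl opprD addrA => H.
  have j0 : 0 <= j%:R * e by rewrite mulr_ge0 // ltW.
  have w0 : 0 < w by (move: e0; lra).
  by rewrite divr_ge0 /= ?ler_pdivrMr ?mul1r; (move: e0; lra).
rewrite ltnS => Hi; apply: IH => //.
by move: H; rewrite natrD mulrDl opprD addrA.
Qed.


Lemma err w js : 0 <= w - (sumn js).+1%:R * e ->
  [/\ 0 <= \prod_(x <- bL w js) x, \prod_(x <- bL w js) x <= 1 &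
      \prod_(x <- bU w js) x - \prod_(x <- bL w js) x <= (size js)%:R * e / w].
Proof.
elim: js w => [|j js IH] w /= H.
  by rewrite !big_nil subrr mul0r mul0r.
have key : (j + sumn js).+1%:R = j%:R + (sumn js).+1%:R :> R by rewrite -addnS natrD.
rewrite key mulrDl opprD addrA in H.
have [PL0 PL1 IHE] := IH _ H.
set w' := w - j%:R * e in H IHE *.
have s0 : 0 <= (sumn js).+1%:R * e by rewrite mulr_ge0 // ltW.
have s1 : e <= (sumn js).+1%:R * e.
  by rewrite ler_peMl ?(ltW e0) // ler1n.
have j0 : 0 <= j%:R * e by rewrite mulr_ge0 // ltW.
have w'0 : e <= w' by move: e0; lra.
have w0 : 0 < w by rewrite /w' in w'0; move: e0; lra.
set PL := \prod_(x <- bL w' js) x in PL0 PL1 IHE *.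
set PU := \prod_(x <- bU w' js) x in IHE *.
rewrite !big_cons -/PL -/PU.
have hw : (w' - e) / w <= 1 by rewrite ler_pdivrMr // mul1r /w'; move: e0; lra.
have hw0 : 0 <= (w' - e) / w by rewrite divr_ge0 //; move: e0; lra.
have -> : w - j.+1%:R * e = w' - e by rewrite /w' -addn1 natrD mulrDl mul1r opprD addrA.
split.
- by rewrite mulr_ge0.
- exact: mulr_ile1.
have h1 : (PU - PL) * w' <= (size js)%:R * e.
  by rewrite -ler_pdivlMr //; move: e0 w'0; lra.
have h2 : e * PL <= e by rewrite ler_piMr // ltW.
have -> : (w' / w) * PU - ((w' - e) / w) * PL = ((PU - PL) * w' + e * PL) / w.
  by field; rewrite gt_eqF.
rewrite ler_pM2r ?invr_gt0 // -addn1 natrD mulrDl ?mul1r.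
by move: h1 h2; lra.
Qed.


Lemma cover_js (xs : seq R) w n : 0 < w - n%:R * e ->
  (forall i, (i < size xs)%N -> 0 <= nth 0 xs i <= 1) ->
  exists js, [/\ size js = size xs, (sumn js <= n)%N,
   (forall i, (i < size xs)%N -> nth 0 xs i <= nth 0 (bU w js) i) &
   (sumn js = n \/ forall i, (i < size xs)%N -> nth 0 (bL w js) i <= nth 0 xs i)].
Proof.
elim: xs w n => [|x xs IH] w n H hx.
  exists [::]; split => //=; case: n H => [|n] H; [left|right] => //.
have /andP[x0 x1] : 0 <= x <= 1 by exact: (hx 0%N).
have hxs : forall i, (i < size xs)%N -> 0 <= nth 0 xs i <= 1.
  by move=> i Hi; exact: (hx i.+1).
have n0 : 0 <= n%:R * e by rewrite mulr_ge0 // ltW.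
have w0 : 0 < w by move: n0 H; lra.
case: (leP (n%:R * e) (w * (1 - x))) => Hc.
  have H' : 0 < w - n%:R * e - 0%:R * e by rewrite mul0r subr0.
  have [js [Hs Hsum Hu Hl]] := IH _ _ H' hxs.
  have js0 : sumn js = 0%N by apply/eqP; rewrite -leqn0.
  exists (n :: js); split => /=.
  - by rewrite Hs.
  - by rewrite js0 addn0.
  - case => [|i] /=; last by rewrite ltnS; exact: Hu.
    by move=> _; rewrite ler_pdivlMr //; move: Hc; lra.
  - by left; rewrite js0 addn0.
have q0 : 0 <= w * (1 - x) / e by rewrite divr_ge0 ?mulr_ge0 ?subr_ge0 // ltW.
have /andP[hj1 hj2] := truncn_itv q0.
set j := Num.Def.trunc _ in hj1 hj2.
rewrite ler_pdivlMr // in hj1.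
rewrite ltr_pdivrMr // in hj2.
have jn : (j <= n)%N.
  rewrite -(ler_nat R); apply: ltW; rewrite -(ltr_pM2r e0).
  exact: le_lt_trans hj1 Hc.
have H' : 0 < w - j%:R * e - (n - j)%:R * e.
  by rewrite natrB // mulrBl; move: H; lra.
have [js [Hs Hsum Hu Hl]] := IH _ _ H' hxs.
exists (j :: js); split => /=.
- by rewrite Hs.
- by rewrite -(subnKC jn) leq_add2l.
- case => [|i] /=; last by rewrite ltnS; exact: Hu.
  by move=> _; rewrite ler_pdivlMr //; move: hj1; lra.
- case: Hl => [Hl|Hl].
    by left; rewrite Hl subnKC.
  right; case => [|i] /=; last by rewrite ltnS; exact: Hl.
  by move=> _; rewrite ler_pdivrMr //; move: hj2; lra.
Qed.

End C.

Fixpoint L (d N : nat) : seq (seq nat) :=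
  if d is d'.+1 then flatten [seq [seq (N - m)%N :: s | s <- L d' m] | m <- iota 0 N.+1]
  else [:: [::]].

Lemma L_prop d N js : js \in L d N -> size js = d /\ (sumn js <= N)%N.
Proof.
elim: d N js => [|d IH] N js.
  by rewrite inE => /eqP ->.
move=> /flatten_mapP [m]; rewrite mem_iota add0n ltnS => /andP[_ mN] /mapP [s Hs ->] /=.
have [-> Hsum] := IH _ _ Hs; split => //.
by rewrite -[X in (_ <= X)%N](subnK mN) leq_add2l.
Qed.

Lemma L_mem d N js : size js = d -> (sumn js <= N)%N -> js \in L d N.
Proof.
elim: d N js => [|d IH] N js.
  by case: js.
case: js => // j s /= [Hs] Hsum.
change (j :: s \in flatten [seq [seq (N - m)%N :: s0 | s0 <- L d m] | m <- iota 0 N.+1]).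
apply/flatten_mapP; exists (N - j)%N.
  by rewrite mem_iota add0n ltnS leq_subr.
apply/mapP; exists s.
  by apply: IH => //; rewrite leq_subRL ?(leq_trans (leq_addr _ _) Hsum).
by rewrite subKn // (leq_trans (leq_addr _ _) Hsum).
Qed.

Lemma hockey d N : \sum_(0 <= m < N.+1) 'C(m + d, d) = 'C(N + d.+1, d.+1).
Proof.
elim: N => [|N IH]; first by rewrite big_nat1 add0n binn add0n binn.
by rewrite big_nat_recr //= IH !addSn !addnS binS.
Qed.

Lemma size_L d N : size (L d N) = 'C(N + d, d).
Proof.
elim: d N => [|d IH] N; first by rewrite /= bin0.
change (size (flatten [seq [seq (N - m)%N :: s0 | s0 <- L d m] | m <- iota 0 N.+1]) = 'C(N + d.+1, d.+1)).
rewrite size_flatten /shape -map_comp sumnE big_map.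
rewrite (eq_bigr (fun m => 'C(m + d, d))); last by move=> m _ /=; rewrite size_map IH.
by rewrite -hockey /index_iota subn0.
Qed.

Lemma binfact N d : ('C(N + d, d) * d`! = \prod_(i < d) (N + i.+1))%N.
Proof.
elim: d => [|d IH]; first by rewrite bin0 big_ord0.
rewrite big_ord_recr /= -IH factS.
have := mul_bin_diag (N + d.+1) d; rewrite addnS /= => H.
rewrite mulnA [(_ * d.+1)%N]mulnC -H; ring.
Qed.

Lemma sum_lin (R : realType) (N d : nat) :
  \sum_(i < d) (N + i.+1)%:R = d%:R * N%:R + d%:R * d.+1%:R / 2 :> R.
Proof.
elim: d => [|d IH]; first by rewrite big_ord0 !mul0r addr0.
have S (n : nat) : n.+1%:R = n%:R + 1 :> R by rewrite -addn1 natrD.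
rewrite big_ord_recr /= IH natrD !S; field; by [].
Qed.

Lemma binom_bound (R : realType) (N d : nat) (y : R) : (0 < d)%N ->
  N%:R + d.+1%:R / 2 <= y -> ('C(N + d, d))%:R <= y ^+ d / (d`!)%:R.
Proof.
move=> d0 Hy.
rewrite ler_pdivlMr ?ltr0n ?fact_gt0 // -natrM binfact natr_prod.
have H0 : {in [pred i : 'I_d | true], forall i : 'I_d, 0 <= (N + i.+1)%:R :> R} by [].
have := leif_AGM H0 => /= -[+ _].
rewrite cardE size_enum_ord => H.
apply: (le_trans (le_trans _ H)).
  by apply: ler_prod => i _; rewrite ler0n lexx.
apply: lerXn2r; rewrite ?nnegrE.
- by apply: divr_ge0 => //; apply: sumr_ge0.
- apply: le_trans Hy; rewrite addr_ge0 // divr_ge0 //.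
have -> : \sum_(i in [pred i : 'I_d | true]) (N + i.+1)%:R = \sum_(i < d) (N + i.+1)%:R :> R.
  by apply: eq_bigl.
rewrite sum_lin.
have dn : (d%:R : R) != 0 by rewrite pnatr_eq0 -lt0n.
apply: le_trans Hy; rewrite le_eqVlt; apply/orP; left; apply/eqP; field.
exact: dn.
Qed.

Section Main.
Variable R : realType.
Local Notation vol := (@vol R _).

Lemma indic_le n (a b : n.-tuple R) t : (forall i, tnth a i <= tnth b i) ->
  \1_(anchored_box R n a) t <= \1_(anchored_box R n b) t :> R.
Proof.
move=> ab; rewrite !indicE; case: (pselect (anchored_box R n a t)) => H.
  rewrite !mem_set //.
  by move=> i; have /andP[h1 h2] := H i; rewrite h1 (lt_le_trans h2 (ab i)).
by rewrite (memNset H) ler0n.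
Qed.

Lemma L1_box n (b : n.-tuple R) : (forall i, 0 <= tnth b i <= 1) ->
  L1norm R n (\1_(anchored_box R n b)) = (vol b)%:E.
Proof.
move=> hb; rewrite /L1norm.
rewrite (_ : (fun t => _) = (fun t => (1 * `|\1_(anchored_box R n b) t -
   false%:R * \1_(anchored_box R n b) t|)%:E)); last first.
  by apply/funext => t; rewrite mul1r mul0r subr0.
rewrite cint_box //.
- by rewrite mul0r subr0 mul1r.
- by move=> i; have /andP[] := hb i.
- by move=> i; have /andP[] := hb i.
Qed.

Lemma L1_diff n (a b : n.-tuple R) : (forall i, 0 <= tnth a i) ->
  (forall i, tnth a i <= tnth b i) -> (forall i, tnth b i <= 1) ->
  L1norm R n (fun t => \1_(anchored_box R n b) t - \1_(anchored_box R n a) t) = (vol b - vol a)%:E.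
Proof.
move=> h1 h2 h3; rewrite /L1norm.
rewrite (_ : (fun t => _) = (fun t => (1 * `|\1_(anchored_box R n b) t -
   true%:R * \1_(anchored_box R n a) t|)%:E)); last first.
  by apply/funext => t; rewrite !mul1r.
by rewrite cint_box // !mul1r.
Qed.

Lemma L1_zero n : L1norm R n (fun _ => 0) = 0%E.
Proof.
rewrite /L1norm.
pose z := [tuple (0 : R) | i < n].
rewrite (_ : (fun t => _) = (fun t => (0 * `|\1_(anchored_box R n z) t -
   true%:R * \1_(anchored_box R n z) t|)%:E)); last first.
  by apply/funext => t; rewrite !mul0r normr0.
rewrite cint_box //.
- by rewrite !mul0r.
- by move=> i; rewrite tnth_mktuple.
- by move=> i; rewrite tnth_mktuple.
Qed.

Lemma inL1_box n (b : n.-tuple R) : (forall i, 0 <= tnth b i <= 1) ->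
  inL1 R n (\1_(anchored_box R n b)).
Proof.
move=> hb; split; first exact: indic_meas.
by rewrite L1_box // ltry.
Qed.

Lemma inL1_zero n : inL1 R n (fun _ => 0).
Proof.
split; first exact: measurable_cst.
by rewrite L1_zero ltry.
Qed.

Definition mk n (s : seq R) : n.-tuple R := [tuple nth 0 s i | i < n].

Lemma vol_mk n (s : seq R) : size s = n -> vol (mk n s) = \prod_(x <- s) x.
Proof.
move=> Hs; rewrite /vol (big_nth 0) Hs big_mkord.
by apply: eq_bigr => i _; rewrite tnth_mktuple.
Qed.


Lemma part1 d (eps : R) :
  (packing_number R d eps (Cd R d) <= bracketing_number R d eps (Cd R d))%E.
Proof.
apply: ge_ereal_sup => _ [k [S [Sinj [SC Ssep]]] <-].
apply: le_ereal_inf_tmp => _ [m [l [u [Hb Hc]]] <-].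
rewrite lee_fin ler_nat.
have Hc' : forall i, exists j, in_bracket R d (l j) (u j) (S i) by move=> i; exact: Hc.
pose c i := proj1_sig (cid (Hc' i)).
have cP i : in_bracket R d (l (c i)) (u (c i)) (S i) := proj2_sig (cid (Hc' i)).
suff cinj : injective c by have := leq_card c cinj; rewrite !card_ord.
move=> i i' E; apply: contrapT => ne.
have Sne : S i <> S i' by move/Sinj.
have := Ssep _ _ Sne; apply/negP; rewrite -leNgt.
have [_ [_ Hj]] := Hb (c i).
apply: le_trans Hj; rewrite /L1norm; apply: cint_mono => t Ht //.
have [_ /(_ t Ht)/andP[h1 h2]] := cP i.
have [_ /(_ t Ht)/andP[h3 h4]] := cP i'.
rewrite E in h1 h2.
rewrite lee_fin; apply: le_trans (ler_norm _).
rewrite E; rewrite ler_norml; apply/andP; split; lra.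
Qed.


Lemma part3 d (eps : R) : (3 <= d)%N -> 0 < eps <= 1 ->
  (d ^ d)%:R / (d`!)%:R * (eps^-1 - 2^-1 * (1 - 3%:R / d%:R)) ^+ d <=
  (d ^ d)%:R / (d`!)%:R * eps ^- d.
Proof.
move=> d3 /andP[e0 e1].
have dpos : (0 : R) < d%:R by rewrite ltr0n (leq_trans _ d3).
have c0 : 3%:R / d%:R <= 1 :> R by rewrite ler_pdivrMr // mul1r ler_nat.
have c1 : 0 <= 3%:R / d%:R :> R by rewrite divr_ge0.
have ie : 1 <= eps^-1 by rewrite invf_ge1.
apply: ler_wpM2l; first by rewrite divr_ge0.
rewrite -exprVn; apply: lerXn2r; rewrite ?nnegrE; try lra.
Qed.


Lemma part2 d (eps : R) : (0 < d)%N -> 0 < eps <= 1 ->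
  (bracketing_number R d eps (Cd R d) <=
   ((d ^ d)%:R / (d`!)%:R * (eps^-1 - 2^-1 * (1 - 3%:R / d%:R)) ^+ d)%:E)%E.
Proof.
move=> d0 /andP[eps0 eps1].
have dpos : (0:R) < d%:R by rewrite ltr0n.
pose e := eps / d%:R.
have e0 : 0 < e by rewrite divr_gt0.
have ee : e <= eps by rewrite ler_pdivrMr // ler_peMr ?(ltW eps0) // ler1n.
pose y := d%:R / eps - d%:R.
have y0 : 0 <= y.
  by rewrite subr_ge0 ler_pdivlMr // ler_piMr // ltW.
have [N [HN1 HN2]] : exists N : nat, y <= N%:R /\ N%:R < y + 1.
  have /andP[t1 t2] := truncn_itv y0.
  set m := Num.Def.trunc y in t1 t2.
  case: (eqVneq (m%:R) y) => Hm.
    by exists m; rewrite Hm; split => //; lra.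
  exists m.+1; split; first exact: ltW.
  have : m%:R < y by rewrite lt_neqAle Hm t1.
  by rewrite -addn1 natrD; lra.
have ye : y * e = 1 - eps by rewrite /y /e; field; rewrite ?gt_eqF.
have hNlt : 0 < 1 - N%:R * e.
  have : N%:R * e < (y + 1) * e by rewrite ltr_pM2r.
  by rewrite mulrDl ye mul1r; lra.
have hNge : 1 - N%:R * e <= eps.
  have : y * e <= N%:R * e by rewrite ler_pM2r.
  by rewrite ye; lra.
set Ls := L d N.
set k := size Ls.
pose js (i : 'I_k) := nth [::] Ls i.
have jsP (i : 'I_k) : size (js i) = d /\ (sumn (js i) <= N)%N.
  by apply: L_prop; apply: mem_nth.
pose u (i : 'I_k) := \1_(anchored_box R d (mk d (bU R e 1 (js i)))) : d.-tuple R -> R.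
pose l (i : 'I_k) := if (sumn (js i) < N)%N then \1_(anchored_box R d (mk d (bL R e 1 (js i))))
   else (fun _ => 0 : R).
apply: (@le_trans _ _ (k%:R)%:E).
  apply: ereal_inf_lbound; exists k => //; exists l, u; split.
  - move=> i; have [Hs Hsum] := jsP i.
    have hU : 0 < 1 - (sumn (js i))%:R * e.
      have : (sumn (js i))%:R * e <= N%:R * e by rewrite ler_pM2r // ler_nat.
      lra.
    have bU_ok : forall j, 0 <= tnth (mk d (bU R e 1 (js i))) j <= 1.
      move=> j; rewrite tnth_mktuple; apply: (@bndsU R e e0 1 (js i) hU).
      by rewrite Hs.
    split; [|split].
    + rewrite /l; case: ifP => H; last exact: inL1_zero.
      apply: inL1_box => j; rewrite tnth_mktuple.
      have H' : 0 <= 1 - (sumn (js i)).+1%:R * e.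
        have : (sumn (js i)).+1%:R * e <= N%:R * e by rewrite ler_pM2r // ler_nat.
        lra.
      have := @bnds R e e0 1 (js i) H' j; rewrite Hs => /(_ (ltn_ord j)) [h1 [h2 h3]].
      by rewrite h1 (le_trans h2 h3).
    + exact: inL1_box.
    + rewrite /l; case: ifP => H.
        have H' : 0 <= 1 - (sumn (js i)).+1%:R * e.
          have : (sumn (js i)).+1%:R * e <= N%:R * e by rewrite ler_pM2r // ler_nat.
          lra.
        have hb := @bnds R e e0 1 (js i) H'.
        rewrite L1_diff; first last.
        - by move=> j; rewrite tnth_mktuple; have := hb j; rewrite Hs => /(_ (ltn_ord j)) [_ [_ ->]].
        - by move=> j; rewrite !tnth_mktuple; have := hb j; rewrite Hs => /(_ (ltn_ord j)) [_ [-> _]].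
        - by move=> j; rewrite tnth_mktuple; have := hb j; rewrite Hs => /(_ (ltn_ord j)) [-> _].
        rewrite !vol_mk ?size_bU ?size_bL //.
        have [_ _ Herr] := @err R e e0 1 (js i) H'.
        rewrite lee_fin; apply: le_trans Herr _.
        by rewrite Hs divr1 /e mulrC divfK // gt_eqF.
      rewrite (_ : (fun t => _) = u i); last by apply/funext => t; rewrite subr0.
      rewrite L1_box // vol_mk ?size_bU // prod_bU //.
      have -> : sumn (js i) = N by apply/eqP; rewrite eqn_leq Hsum leqNgt H.
      by rewrite divr1 lee_fin.
  - move=> f [x Hx ->].
    pose xs := tval x.
    have Hxs : forall j, (j < size xs)%N -> 0 <= nth 0 xs j <= 1.
      move=> j; rewrite size_tuple => Hj.
      have /andP[h1 h2] := Hx (Ordinal Hj).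
      by rewrite -(tnth_nth 0 x (Ordinal Hj)) h1 ltW.
    have [js0 [Hs Hsum Hu Hl]] := @cover_js R e e0 xs 1 N hNlt Hxs.
    have Hmem : js0 \in Ls by apply: L_mem => //; rewrite Hs size_tuple.
    have Hi : (index js0 Ls < k)%N by rewrite index_mem.
    exists (Ordinal Hi).
    have jsi : js (Ordinal Hi) = js0 by rewrite /js /= nth_index.
    split.
      apply: inL1_box => j; have /andP[h1 h2] := Hx j; by rewrite h1 ltW.
    move=> t Ht; apply/andP; split.
    + rewrite /l jsi; case: ifP => H.
        apply: indic_le => j; rewrite tnth_mktuple (tnth_nth 0).
        case: Hl => [Hl|Hl]; first by rewrite Hl ltnn in H.
        by apply: Hl; rewrite size_tuple.
      by rewrite indicE ler0n.
    + rewrite /u jsi; apply: indic_le => j; rewrite tnth_mktuple (tnth_nth 0).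
      by apply: Hu; rewrite size_tuple.
rewrite lee_fin /k /Ls size_L.
have Hy' : N%:R + d.+1%:R / 2 <= d%:R * (eps^-1 - 2^-1 * (1 - 3%:R / d%:R)).
  have E1 : d.+1%:R = d%:R + 1 :> R by rewrite -addn1 natrD.
  have -> : d%:R * (eps^-1 - 2^-1 * (1 - 3%:R / d%:R)) = y + 1 + d.+1%:R / 2 :> R.
    rewrite E1 /y; field.
    by rewrite !gt_eqF.
  by lra.
apply: le_trans (@binom_bound R N d _ d0 Hy') _.
by rewrite exprMn natrX mulrAC.
Qed.

End Main.

Theorem mainTheorem5 (R : realType) (d : nat) (eps : R) :
  (3 <= d)%N -> 0 < eps <= 1 ->
  let B := ((d ^ d)%:R / (d`!)%:R) in
  [/\ (packing_number R d eps (Cd R d) <= bracketing_number R d eps (Cd R d))%E,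
      (bracketing_number R d eps (Cd R d) <=
         (B * (eps^-1 - 2^-1 * (1 - 3%:R / d%:R)) ^+ d)%:E)%E
    & B * (eps^-1 - 2^-1 * (1 - 3%:R / d%:R)) ^+ d <= B * eps ^- d].
Proof.
move=> d3 heps B; split.
- exact: part1.
- by apply: part2 => //; apply: leq_trans d3.
- exact: part3.
Qed.
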